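(* Let $D$ be a friendship digraph. Then $D^{\leftarrow}$ is a friendship digraph. Equivalently, in a friendship digraph any two distinct vertices have exactly one common in-neighbor.
   Context: All digraphs are finite and have neither loops nor parallel arcs (a pair of opposite arcs $(u,v)$ and $(v,u)$ is allowed). A friendship digraph is a nontrivial digraph (at least two vertices) in which any two distinct vertices have exactly one common out-neighbor. For a digraph $D$, $D^{\leftarrow}$ is the digraph with $V(D^{\leftarrow})=V(D)$ and $(u,v)\in A(D^{\leftarrow})$ if and only if $(v,u)\in A(D)$. *)

(* Defs.v *)
From mathcomp Require Import all_boot.
Set Implicit Arguments. Unset Strict Implicit. Unset Printing Implicit Defensive.

(* No parallel arcs is automatic
   (a relation); "no loops" is the condition [irreflexive arc]. *)
Definition loopless (V : finType) (arc : rel V) : Prop := irreflexive arc.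

Definition common_out (V : finType) (arc : rel V) (u v : V) : {set V} :=
  [set w | arc u w && arc v w].

Definition friendship_digraph (V : finType) (arc : rel V) : Prop :=
  [/\ loopless arc, 1 < #|V| &
      forall u v : V, u != v -> #|common_out arc u v| = 1].

Definition converse (V : finType) (arc : rel V) : rel V := fun u v => arc v u.

(* Main.v *)
Require Import Defs.
From mathcomp Require Import all_boot all_order all_algebra.
Import GRing.Theory Num.Theory.
Set Implicit Arguments. Unset Strict Implicit. Unset Printing Implicit Defensive.

Definition Nout (V : finType) (arc : rel V) (u : V) : {set V} := [set x | arc u x].
Definition Nin (V : finType) (arc : rel V) (x : V) : {set V} := [set u | arc u x].

Lemma co_uniq (V : finType) (arc : rel V)
  (Hf : forall u v : V, u != v -> #|common_out arc u v| = 1) u v w1 w2 :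
  u != v -> arc u w1 -> arc v w1 -> arc u w2 -> arc v w2 -> w1 = w2.
Proof.
move=> /Hf /eqP /cards1P [z Hz] a b c d.
have h1 : w1 \in common_out arc u v by rewrite inE a b.
have h2 : w2 \in common_out arc u v by rewrite inE c d.
by move: h1 h2; rewrite Hz !inE => /eqP -> /eqP ->.
Qed.

Definition fco (V : finType) (arc : rel V) (u v : V) : V :=
  odflt u [pick w in common_out arc u v].

Lemma fco_in (V : finType) (arc : rel V)
  (Hf : forall u v : V, u != v -> #|common_out arc u v| = 1) u v :
  u != v -> arc u (fco arc u v) /\ arc v (fco arc u v).
Proof.
move=> /Hf Hc; rewrite /fco; case: pickP => [w|H0].
  by rewrite inE => /andP.
by move: Hc; rewrite eq_card0.
Qed.

Lemma d_ge2 (V : finType) (arc : rel V) (Hl : irreflexive arc) (H1 : 1 < #|V|)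
  (Hf : forall u v : V, u != v -> #|common_out arc u v| = 1) u :
  1 < #|Nout arc u|.
Proof.
have : 0 < #|[set~ u]| by rewrite cardsC1 -ltnS (ltn_predK H1).
case/card_gt0P => v; rewrite !inE eq_sym => Hv.
have [a1 _] := fco_in Hf Hv.
set w := fco arc u v in a1.
rewrite ltnNge; apply/negP => /card_le1_eqP Hle.
have Hwu : u != w by apply/negP => /eqP Ew; move: a1; rewrite -Ew Hl.
have [b1 b2] := fco_in Hf Hwu.
have : fco arc u w = w by apply: Hle; rewrite inE.
by move=> E; move: b2; rewrite E Hl.
Qed.

Lemma noninc (V : finType) (arc : rel V)
  (Hf : forall u v : V, u != v -> #|common_out arc u v| = 1) u x :
  ~~ arc u x ->
  #|Nin arc x| <= #|Nout arc u| /\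
  (#|Nin arc x| = #|Nout arc u| -> forall y, arc u y -> exists v, arc v x /\ arc v y).
Proof.
move=> Hux.
have Hne : forall v, v \in Nin arc x -> u != v.
  by move=> v; rewrite inE => Hv; apply/negP => /eqP E; move: Hux; rewrite E Hv.
have inj : {in Nin arc x &, injective (fco arc u)}.
  move=> v1 v2 H1 H2 E; case: (eqVneq v1 v2) => // Hv.
  have [a1 b1] := fco_in Hf (Hne _ H1).
  have [a2 b2] := fco_in Hf (Hne _ H2).
  move: H1 H2; rewrite !inE => c1 c2.
  have Ex := co_uniq Hf Hv c1 c2 b1 (etrans (congr1 (arc v2) E) b2).
  by move: Hux; rewrite Ex a1.
have sub : [set fco arc u v | v in Nin arc x] \subset Nout arc u.
  apply/subsetP => y /imsetP [v Hv ->]; rewrite inE.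
  by have [] := fco_in Hf (Hne _ Hv).
have Hc := card_in_imset inj.
split; first by rewrite -Hc; apply: subset_leq_card.
move=> E y Hy.
have : [set fco arc u v | v in Nin arc x] == Nout arc u by rewrite eqEcard sub Hc E /=.
move/eqP => E2.
have : y \in Nout arc u by rewrite inE.
rewrite -E2 => /imsetP [v Hv ->]; exists v.
move: (Hv); rewrite inE => ->; split => //.
by have [] := fco_in Hf (Hne _ Hv).
Qed.

From mathcomp Require Import zify.
Local Open Scope ring_scope.

Lemma eq_noninc (V : finType) (arc : rel V) (Hl : irreflexive arc)
  (Hf : forall u v : V, u != v -> #|common_out arc u v| = 1) u x :
  ~~ arc u x -> #|Nin arc x| = #|Nout arc u|.
Proof.
pose k u := #|~: Nout arc u|.
pose k' x := #|~: Nin arc x|.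
have kp : forall u, (0 < k u)%N.
  by move=> w; apply/card_gt0P; exists w; rewrite !inE Hl.
have kp' : forall x, (0 < k' x)%N.
  by move=> w; apply/card_gt0P; exists w; rewrite !inE Hl.
have kk : forall u x, ~~ arc u x -> (k u <= k' x)%N.
  move=> w y Hw; have [Hle _] := noninc Hf Hw.
  have := cardsC (Nout arc w); have := cardsC (Nin arc y); rewrite /k /k'; lia.
pose G u x : rat := if x \in ~: Nout arc u then (k u)%:R^-1 - (k' x)%:R^-1 else 0.
have Gge0 : forall u x, 0 <= G u x.
  move=> w y; rewrite /G; case: ifP => // H; rewrite subr_ge0.
  rewrite lef_pV2 ?posrE ?ltr0n // ler_nat; apply: kk; by move: H; rewrite !inE.
have S1 : forall (c : V -> rat) (A : {set V}), c = (fun _ => (#|A|%:R)^-1) -> (0 < #|A|)%N ->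
   \sum_y (if y \in A then c y else 0) = 1.
  move=> c A -> HA; rewrite -big_mkcond /= sumr_const -(mulr_natr (_^-1)) mulVf //.
  by rewrite pnatr_eq0 -lt0n.
have Hsum : \sum_u \sum_x G u x = 0.
  have -> : \sum_u \sum_x G u x = \sum_u \sum_x (if x \in ~: Nout arc u then (k u)%:R^-1 else 0)
          - \sum_u \sum_x (if x \in ~: Nout arc u then (k' x)%:R^-1 else 0).
    rewrite -sumrB; apply: eq_bigr => w _; rewrite -sumrB; apply: eq_bigr => y _.
    by rewrite /G; case: ifP => //; rewrite subr0.
  rewrite [X in _ - X]exchange_big /=.
  have -> : \sum_j \sum_i (if j \in ~: Nout arc i then (k' j)%:R^-1 else 0 : rat)
          = \sum_j \sum_i (if i \in ~: Nin arc j then (k' j)%:R^-1 else 0 : rat).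
    by apply: eq_bigr => y _; apply: eq_bigr => w _; rewrite !inE.
  rewrite (eq_bigr (fun _ => 1)); last by move=> w _; apply: S1 => //; apply: kp.
  rewrite [X in _ - X](eq_bigr (fun _ => 1)); last by move=> w _; apply: S1 => //; apply: kp'.
  by rewrite subrr.
move=> Hux.
have inner := psumr_eq0P (fun w _ => sumr_ge0 _ (fun y _ => Gge0 w y)) Hsum (erefl true : true).
have := psumr_eq0P (fun y _ => Gge0 u y) (inner u) (erefl true : true).
move=> /(_ x); rewrite /G !inE Hux /= => /eqP; rewrite subr_eq0 => /eqP /invr_inj /eqP; rewrite eqr_nat => /eqP E.
have := cardsC (Nout arc u); have := cardsC (Nin arc x); rewrite -/(k u) -/(k' x) E; lia.
Qed.

Local Close Scope ring_scope.

Theorem theorem2p4 (V : finType) (arc : rel V) :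
  friendship_digraph arc -> friendship_digraph (converse arc).
Proof.
move=> [Hl H1 Hf]; split => //.
move=> x y Hxy; apply/eqP; rewrite eqn_leq; apply/andP; split.
  apply/card_le1_eqP => w1 w2; rewrite !inE /converse => /andP[a b] /andP[c d].
  case: (eqVneq w1 w2) => // Hne.
  by have E := co_uniq Hf Hne a c b d; move: Hxy; rewrite E eqxx.
apply/card_gt0P; rewrite /converse.
case: (pickP (fun w => arc w y && ~~ arc w x)) => [w /andP [Hy Hx] | Hno].
  have [_ Heq] := noninc Hf Hx.
  have [v [a b]] := Heq (eq_noninc Hl Hf Hx) y Hy.
  by exists v; rewrite inE a b.
case: (pickP (fun w => arc w y)) => [w Hy | Hn].
  exists w; rewrite inE Hy andbT.
  by move: (Hno w); rewrite Hy /= => /negbFE.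
have Hw : ~~ arc y y by rewrite Hl.
have := eq_noninc Hl Hf Hw.
have -> : #|Nin arc y| = 0 by apply: eq_card0 => w; rewrite inE Hn.
move=> E; have := d_ge2 Hl H1 Hf y; rewrite -E.
by [].
Qed.
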